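(* Assume $\operatorname{rank}(X)=n$ and that there exists $\tilde A=[\tilde a_1\ \cdots\ \tilde a_s]\in\mathbb{R}^{n\times s}$ with pairwise distinct columns such that $\min_{i\in\mathbb{S}}|I_i(\tilde A)|\ge s\,\nu_n(X)$. Then for every $A\in\mathbb{R}^{n\times s}$, if $\phi(A)=\phi(\tilde A)$ then $\mathrm{set}(A)=\mathrm{set}(\tilde A)$.
   Context: Data: integers $n,s,N\ge1$ and a dataset $\varpi^N=((x_1,y_1),\ldots,(x_N,y_N))$ with $x_t\in\mathbb{R}^n$, $y_t\in\mathbb{R}$; $X=[x_1\ \cdots\ x_N]\in\mathbb{R}^{n\times N}$. Let $\mathbb{T}=\{1,\ldots,N\}$, $\mathbb{S}=\{1,\ldots,s\}$. For $A=[a_1\ \cdots\ a_s]\in\mathbb{R}^{n\times s}$, $\mathrm{set}(A)=\{a_1,\ldots,a_s\}$; $\sigma_A:\mathbb{T}\to\mathbb{S}$ is a switching signal satisfying $\sigma_A(t)\in\arg\min_{i\in\mathbb{S}}|y_t-x_t^\top a_i|$ for all $t$, selected uniquely by a fixed rule depending only on $A$ and the data (among all admissible choices, one maximizing $\min_{i}|I_i(A)|$, ties then broken by assigning the smallest admissible index). $I_i(A)=\{t\in\mathbb{T}:\sigma_A(t)=i\}$. $\phi(A)=\big(y_1-x_1^\top a_{\sigma_A(1)},\ldots,y_N-x_N^\top a_{\sigma_A(N)}\big)^\top$. Genericity index: for $X$ with $\operatorname{rank}(X)=n$, $\nu_n(X)$ is the smallest integer $m$ such that for every $\mathcal{S}\subset\mathbb{T}$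 with $|\mathcal{S}|=m$, the submatrix $X_{\mathcal{S}}$ of columns of $X$ indexed by $\mathcal{S}$ has rank $n$. *)

(* Defs.v *)
From HB Require Import structures.
From mathcomp Require Import all_boot all_order all_algebra.
From mathcomp Require Import reals.
Set Implicit Arguments. Unset Strict Implicit. Unset Printing Implicit Defensive.
Import Order.TTheory GRing.Theory Num.Theory.
Local Open Scope ring_scope.

Section SwitchedData.
Variables (R : realType) (n s N : nat).
Variables (X : 'M[R]_(n, N)) (y : 'rV[R]_N).

Definition res (A : 'M[R]_(n, s)) (t : 'I_N) (i : 'I_s) : R :=
  y 0 t - (X^T *m A) t i.

Definition admissible (A : 'M[R]_(n, s)) (sg : {ffun 'I_N -> 'I_s}) : bool :=
  [forall t, forall i, `|res A t (sg t)| <= `|res A t i| ].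

(* min_i |I_i| for a signal sg (s >= 1 assumed; each card is <= N) *)
Definition mincard (sg : {ffun 'I_N -> 'I_s}) : nat :=
  \big[minn/N]_(i : 'I_s) #|[set t | sg t == i]|.

Definition optimal (A : 'M[R]_(n, s)) (sg : {ffun 'I_N -> 'I_s}) : bool :=
  admissible A sg &&
  [forall sg' : {ffun 'I_N -> 'I_s}, admissible A sg' ==> (mincard sg' <= mincard sg)%N].

(* lexicographic code of a signal (sg(1) most significant digit, base s) *)
Definition code (sg : {ffun 'I_N -> 'I_s}) : nat :=
  (\sum_(t < N) (sg t : nat) * s ^ (N - t.+1))%N.

(* tie-break: among optimal signals, the lexicographically smallest one,
   i.e. smallest admissible index assigned first *)
Definition chosen (A : 'M[R]_(n, s)) (sg : {ffun 'I_N -> 'I_s}) : bool :=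
  optimal A sg &&
  [forall sg' : {ffun 'I_N -> 'I_s}, optimal A sg' ==> (code sg <= code sg')%N].

(* the switching signal sigma_A (always Some when s >= 1) *)
Definition sigma (A : 'M[R]_(n, s)) : option {ffun 'I_N -> 'I_s} :=
  [pick sg | chosen A sg].

Definition Iset (A : 'M[R]_(n, s)) (i : 'I_s) : {set 'I_N} :=
  [set t | if sigma A is Some sg then sg t == i else false].

Definition phi (A : 'M[R]_(n, s)) : 'rV[R]_N :=
  \row_t (if sigma A is Some sg then res A t (sg t) else 0).

End SwitchedData.

(* set(A) = {a_1, ..., a_s}, as a sequence compared up to membership *)
Definition colset (R : realType) (n s : nat) (A : 'M[R]_(n, s)) : seq 'cV[R]_n :=
  [seq col i A | i <- enum 'I_s].

Definition subcols (R : realType) (n N : nat) (X : 'M[R]_(n, N)) (S : {set 'I_N})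
  : 'M[R]_(n, #|S|) := colsub (@enum_val _ (mem S)) X.

Definition generic_at (R : realType) (n N : nat) (X : 'M[R]_(n, N)) (m : nat) : bool :=
  [forall S : {set 'I_N}, (#|S| == m) ==> (\rank (subcols X S) == n)].

Lemma generic_at_exists (R : realType) (n N : nat) (X : 'M[R]_(n, N)) :
  exists m, generic_at X m.
Proof.
exists N.+1; apply/forallP => S; apply/implyP => HS.
have := max_card (mem S); rewrite card_ord => H.
by move: HS; rewrite eqn_leq [(N.+1 <= _)%N]leqNgt ltnS H andbF.
Qed.

Definition nu (R : realType) (n N : nat) (X : 'M[R]_(n, N)) : nat :=
  ex_minn (generic_at_exists X).

(* Main.v *)
Require Import Defs.
From HB Require Import structures.
From mathcomp Require Import all_boot all_order all_algebra.
From mathcomp Require Import reals.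
Import Order.TTheory GRing.Theory Num.Theory.
Local Open Scope ring_scope.

Lemma ex_argmin (T : finType) d (U : orderType d) (P : pred T) (F : T -> U) x0 :
  P x0 -> exists2 x, P x & forall y, P y -> (F x <= F y)%O.
Proof.
move=> Px0; case: (arg_minP F Px0) => x Px H; exists x => // z Pz; exact: H.
Qed.

Lemma ex_argmin_nat (T : finType) (P : pred T) (F : T -> nat) x0 :
  P x0 -> exists2 x, P x & forall y, P y -> (F x <= F y)%N.
Proof.
move=> Px0; have [x Px H] := @ex_argmin _ _ _ P F x0 Px0; exists x => // z /H.

Qed.

Lemma sigma_some (R : realType) (n s N : nat) (X : 'M[R]_(n, N)) (y : 'rV[R]_N)
  (A : 'M[R]_(n, s)) : (0 < s)%N ->
  exists sg, sigma X y A = Some sg.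
Proof.
case: s A => // s A _.
have ex1 : exists sg, admissible X y A sg.
  have [f Hf] : exists f : 'I_N -> 'I_s.+1, forall t j,
      `|res X y A t (f t)| <= `|res X y A t j|.
    apply: (@fin_all_exists _ _ (fun t i => forall j, `|res X y A t i| <= `|res X y A t j|)) => t.
    have [i _ Hi] := @ex_argmin _ _ _ xpredT (fun i => `|res X y A t i|) ord0 isT.
    by exists i => j; apply: Hi.
  exists (finfun f); apply/forallP => t; apply/forallP => j; rewrite ffunE; exact: Hf.
have [sg0 Hsg0] := ex1.
have [sg1 Hsg1 Hmax] := @ex_argmin _ _ _ (admissible X y A) (fun sg => mincard sg : nat^d) _ Hsg0.
have opt1 : optimal X y A sg1.
  rewrite /optimal Hsg1 /=; apply/forallP => sg; apply/implyP => /Hmax.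
  by rewrite leEdual leEnat.
have [sg2 Hsg2 Hmin] := @ex_argmin_nat _ _ (@code _ _) _ opt1.
rewrite /sigma; case: pickP => [sg _|/(_ sg2)]; first by exists sg.
rewrite /chosen Hsg2 /=.
case: forallP => // [] [] sg; apply/implyP => /Hmin //.
Qed.
Lemma ex_subset_card (T : finType) (S : {set T}) (m : nat) :
  (m <= #|S|)%N -> exists S' : {set T}, S' \subset S /\ #|S'| = m.
Proof.
elim: m => [|m IH] H; first by exists set0; rewrite sub0set cards0.
have [S' [sub cS']] := IH (ltnW H).
have : (0 < #|S :\: S'|)%N by rewrite cardsD (setIidPr sub) cS' subn_gt0.
case/card_gt0P => x; rewrite in_setD => /andP [xS' xS].
exists (x |: S'); split; first by rewrite subUset sub1set xS.
by rewrite cardsU1 xS' cS'.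
Qed.

Lemma pigeon (T : finType) (s m : nat) (I : {set T}) (p : T -> 'I_s) :
  (0 < s)%N -> (s * m <= #|I|)%N -> exists j : 'I_s, (m <= #|[set t in I | p t == j]|)%N.
Proof.
move=> s0 H; case: m H => [|m] H.
  by case: s p H s0 => [|s] p H s0 //; exists ord0.
case: (boolP [exists j, m.+1 <= #|[set t in I | p t == j]|]%N) => [/existsP//|/existsPn Hn]; exfalso.
have: (#|I| <= s * m)%N.
  rewrite -sum1_card (partition_big p xpredT) //=.
  rewrite -[X in (_ <= X * _)%N]card_ord -sum_nat_const.
  apply: leq_sum => j _; rewrite sum1_card.
  have := Hn j; rewrite -ltnNge ltnS; apply: leq_trans.
  by apply: subset_leq_card; apply/subsetP => t; rewrite !inE.
move=> H2; have := leq_trans H H2; by rewrite leq_pmul2l // ltnn.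
Qed.

Lemma key (R : realType) (n N : nat) (X : 'M[R]_(n, N)) (v : 'cV[R]_n) (S : {set 'I_N}) :
  \rank (subcols X S) = n ->
  (forall t, t \in S -> \sum_r X r t * v r 0 = 0) -> v = 0.
Proof.
move=> rk H.
have : v^T *m subcols X S = 0.
  apply/matrixP => i k; rewrite ord1 !mxE -[RHS](H (enum_val k)); last exact: enum_valP.
  by apply: eq_bigr => r _; rewrite !mxE mulrC.
move/eqP; rewrite mulmx_free_eq0; last by rewrite /row_free rk.
by move/eqP => /(congr1 trmx); rewrite trmxK trmx0.
Qed.

Theorem lemma4 (R : realType) (n s N : nat) (X : 'M[R]_(n, N)) (y : 'rV[R]_N) :
  (0 < n)%N -> (0 < s)%N -> (0 < N)%N ->
  \rank X = n ->
  forall At : 'M[R]_(n, s),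
    (forall i j : 'I_s, col i At = col j At -> i = j) ->
    (forall i : 'I_s, (s * nu X <= #|Iset X y At i|)%N) ->
    forall A : 'M[R]_(n, s),
      phi X y A = phi X y At -> colset A =i colset At.
Proof.
move=> n0 s0 N0 rX At dist HI A Hphi.
have [sgt Et] := @sigma_some R n s N X y At s0.
have [sgA EA] := @sigma_some R n s N X y A s0.
have Gnu : generic_at X (nu X) by rewrite /nu; case: ex_minnP.
have Hm : forall i, exists j, col i At = col j A.
  move=> i; have := HI i; rewrite /Iset Et => Hc.
  have [j Hj] := @pigeon _ s _ _ sgA s0 Hc.
  have [S' [sub cS]] := @ex_subset_card _ _ _ Hj.
  exists j; apply/eqP; rewrite -subr_eq0; apply/eqP; apply: (@key R n N X _ S').
    have cSb : #|S'| == nu X by apply/eqP.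
    by move: Gnu => /forallP /(_ S') /implyP /(_ cSb) /eqP.
  move=> t tS; have := subsetP sub t tS; rewrite !inE => /andP [/eqP ti /eqP tj].
  have := congr1 (fun M : 'rV[R]_N => M 0 t) Hphi; rewrite /phi EA Et !mxE ti tj /res !mxE.
  move=> /addrI /oppr_inj E.
  have eA : \sum_r X^T t r * A r j = \sum_r X r t * A r j.
    by apply: eq_bigr => r _; rewrite mxE.
  have eAt : \sum_r X^T t r * At r i = \sum_r X r t * At r i.
    by apply: eq_bigr => r _; rewrite mxE.
  rewrite (eq_bigr (fun r => X r t * At r i - X r t * A r j)); last first.
    by move=> r _; rewrite !mxE mulrBr.
  by rewrite sumrB -eA -eAt E subrr.
have [f Hf] := @fin_all_exists _ _ (fun i j => col i At = col j A) Hm.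
have finj : injective f by move=> i i' E; apply: dist; rewrite !Hf E.
move=> x; rewrite /colset; apply/mapP/mapP => -[k _ ->].
  have := inj_card_onto finj (leqnn _) k; case/codomP => i ->.
  by exists i; rewrite ?mem_enum // Hf.
by exists (f k); rewrite ?mem_enum // Hf.
Qed.
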